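(* Let $M=(Q_M,\Sigma,\delta_M,s_M,F_M)$ be a complete DFA with $m\ge 2$ states and $N=(Q_N,\Sigma,\delta_N,s_N,F_N)$ a complete DFA with $n\ge 1$ states over the same alphabet, and suppose $k:=|F_M\setminus\{s_M\}|\ge 1$. Then there exists a complete DFA with at most $(2^{m-1}+2^{m-k-1})\cdot n-n+1$ states that accepts $L(M)^*\cap L(N)$.
   Context: A DFA is a 5-tuple $(Q,\Sigma,\delta,s,F)$ with total transition function $\delta:Q\times\Sigma\to Q$ (complete DFA); $L(M)$ is the accepted language; $L^*$ is the Kleene star of $L$. *)

(* Defs.v *)
From mathcomp Require Import all_boot.
Set Implicit Arguments. Unset Strict Implicit. Unset Printing Implicit Defensive.

Record dfa (A : finType) := Dfa {
  state : finType;
  delta : state -> A -> state;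
  start : state;
  final : {set state}
}.

Definition run (A : finType) (M : dfa A) (q : state M) (w : seq A) : state M :=
  foldl (@delta A M) q w.

Definition accepts (A : finType) (M : dfa A) (w : seq A) : Prop :=
  run (start M) w \in final M.

Definition kstar (A : finType) (L : seq A -> Prop) (w : seq A) : Prop :=
  exists ws : seq (seq A), (forall u, u \in ws -> L u) /\ flatten ws = w.

(* Main.v *)
Require Import Defs.
From mathcomp Require Import all_boot.
Set Implicit Arguments. Unset Strict Implicit. Unset Printing Implicit Defensive.

Section Star.
Variables (A : finType) (M N : dfa A).
Local Notation QM := (state M).
Local Notation s := (start M).
Local Notation F := (final M).

Definition closeM (X : {set QM}) := if X :&: F != set0 then s |: X else X.
Definition stepM (P : {set QM}) (a : A) := closeM [set delta q a | q in P].
Definition good (P : {set QM}) := (P != set0) && ((P :&: F != set0) ==> (s \in P)).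

Lemma good_step P a : good P -> good (stepM P a).
Proof.
case/andP=> /set0Pn [p Hp] _; rewrite /good /stepM /closeM.
case: ifP => H.
  apply/andP; split; first by apply/set0Pn; exists s; rewrite setU11.
  by rewrite setU11 implybT.
rewrite H /= andbT; apply/set0Pn; exists (delta p a); exact: imset_f.
Qed.

Lemma good1 : good [set s].
Proof.
rewrite /good; apply/andP; split; first by apply/set0Pn; exists s; rewrite set11.
by rewrite set11 implybT.
Qed.

Definition SM := {P : {set QM} | good P}.
Definition s0 : SM := exist _ [set s] good1.
Definition stepS (x : SM) (a : A) : SM := exist _ (stepM (val x) a) (good_step a (valP x)).

Definition deltaD (o : option (SM * state N)) (a : A) : option (SM * state N) :=
  let: (x, q) := odflt (s0, start N) o in Some (stepS x a, delta q a).
Definition finD : {set option (SM * state N)} :=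
  [set o | if o is Some (x, q) then (val x :&: F != set0) && (q \in final N)
           else start N \in final N].
Definition D : dfa A := @Dfa A _ deltaD None finD.

Lemma runD_some x q w : run (M:=D) (Some (x, q)) w = Some (foldl stepS x w, run q w).
Proof. by elim: w x q => [|a w IH] x q //; exact: IH. Qed.

Lemma val_fold x w : val (foldl stepS x w) = foldl stepM (val x) w.
Proof. by elim: w x => [|a w IH] x //=; rewrite IH. Qed.

Lemma kstar_nil (L : seq A -> Prop) : kstar L [::].
Proof. by exists [::]. Qed.

Lemma kstar_cat (L : seq A -> Prop) u v : kstar L u -> L v -> kstar L (u ++ v).
Proof.
case=> ws [H1 H2] Hv; exists (ws ++ [:: v]); split.
  by move=> x; rewrite mem_cat inE => /orP [/H1 //| /eqP ->].
by rewrite flatten_cat /= cats0 H2.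
Qed.

Lemma kstar_last (L : seq A -> Prop) w : kstar L w -> w <> [::] ->
  exists u v, [/\ w = u ++ v, kstar L u, L v & v <> [::]].
Proof.
case=> ws [H1 <-]; elim: ws H1 => [|x ws IH] H1 //= Hne.
have Hx : L x by apply: H1; rewrite inE eqxx.
have H1' : forall u, u \in ws -> L u by move=> u Hu; apply: H1; rewrite inE Hu orbT.
case E: (flatten ws) => [|b r].
  exists [::], x; split => //; [by rewrite cats0 | exact: kstar_nil | by move: Hne; rewrite E cats0].
case: (IH H1') => [|u [v [Ew Ku Lv Hv]]]; first by rewrite E.
case: Ku => wu [Hwu Ewu].
exists (x ++ u), v; split => //; first by rewrite -E Ew catA.
exists (x :: wu); split; last by rewrite /= Ewu.
by move=> y; rewrite inE => /orP [/eqP -> //| /Hwu].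
Qed.

Definition SW (w : seq A) := foldl stepM [set s] w.

Lemma SW_spec w q : q \in SW w <->
  exists u v, [/\ w = u ++ v, kstar (accepts M) u & run s v = q].
Proof.
elim/last_ind: w q => [|w a IH] q.
  rewrite /SW /= inE; split.
    by move/eqP->; exists [::], [::]; split => //; exact: kstar_nil.
  by case=> u [v [E _ <-]]; case: u E => //; case: v.
rewrite /SW foldl_rcons -/(SW w) /stepM /closeM; split.
  have Himg : forall q, q \in [set delta q0 a | q0 in SW w] ->
      exists u v, [/\ rcons w a = u ++ v, kstar (accepts M) u & run s v = q].
    move=> {}q; case/imsetP=> p /IH [u [v [Ew Ku Rv]]] ->.
    exists u, (rcons v a); split => //; first by rewrite Ew rcons_cat.
    by rewrite /run foldl_rcons -/(run _ _) Rv.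
  case: ifP => [/set0Pn [f] | _]; last by move/Himg.
  rewrite inE => /andP [Hf HfF]; rewrite in_setU1 => /orP [/eqP -> | /Himg //].
  rewrite -/(SW w) in Hf.
  have [u [v [Ew Ku Rv]]] := Himg f Hf.
  exists (rcons w a), [::]; split => //; first by rewrite cats0.
  by rewrite Ew; apply: kstar_cat => //; rewrite /accepts Rv.
case=> u [v [Ew Ku Rv]].
have Hin : forall q', q' \in [set delta q0 a | q0 in SW w] -> q' \in
    (if [set delta q0 a | q0 in SW w] :&: F != set0 then s |: [set delta q0 a | q0 in SW w]
     else [set delta q0 a | q0 in SW w]).
  by move=> q' Hq; case: ifP => _ //; rewrite inE Hq orbT.
case/lastP: v Ew Rv => [|v b] Ew Rv.
  rewrite cats0 in Ew; rewrite -Rv /=; rewrite -Ew in Ku.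
  have [|u1 [v1 [E1 K1 L1 Hv1]]] := kstar_last Ku; first by case: (w).
  case/lastP: v1 E1 L1 Hv1 => [//|v1 b] E1 L1 _.
  rewrite -rcons_cat in E1; case/rcons_inj: E1 => Ew1 Eb; subst b.
  have Hp : run s v1 \in SW w by apply/IH; exists u1, v1; split.
  have Hd : run s (rcons v1 a) \in [set delta q0 a | q0 in SW w].
    by rewrite /run foldl_rcons -/(run _ _); exact: imset_f.
  rewrite ifT; first by rewrite setU11.
  by apply/set0Pn; exists (run s (rcons v1 a)); rewrite inE Hd.
rewrite -rcons_cat in Ew; case/rcons_inj: Ew => Ew Eb; subst b.
apply: Hin; rewrite -Rv /run foldl_rcons -/(run _ _); apply: imset_f.
by apply/IH; exists u, v.
Qed.

Lemma SW_acc w : w <> [::] -> (SW w :&: F != set0) <-> kstar (accepts M) w.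
Proof.
move=> Hw; split.
  case/set0Pn=> f; rewrite inE => /andP [/SW_spec [u [v [Ew Ku Rv]]] Hf].
  by rewrite Ew; apply: kstar_cat => //; rewrite /accepts Rv.
move=> K; have [u [v [Ew Ku Lv _]]] := kstar_last K Hw.
apply/set0Pn; exists (run s v); rewrite inE Lv andbT; apply/SW_spec.
by exists u, v.
Qed.

Lemma D_correct w : accepts D w <-> (kstar (accepts M) w /\ accepts N w).
Proof.
case: w => [|a w].
  rewrite /accepts /= inE; split; [by move=> H; split => //; exact: kstar_nil | by case].
rewrite /accepts.
have -> : run (start (D)) (a :: w) = Some (foldl stepS s0 (a :: w), run (start N) (a :: w)).
  exact: (runD_some (stepS s0 a) (delta (start N) a) w).
rewrite inE val_fold.
have H := SW_acc (w := a :: w) (fun H => ltac:(discriminate H)).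
rewrite /SW in H; split.
  by case/andP=> /H ? ->.
by case=> /H -> ->.
Qed.

End Star.

Lemma arith a X n : a + 1 <= X -> (a * n).+1 <= X * n - n + 1.
Proof.
move=> H; rewrite addn1 ltnS -{3}(mul1n n) -mulnBl leq_mul2r.
have H1 : 1 <= X by apply: leq_trans H; rewrite addn1.
by rewrite leq_subRL // addnC H orbT.
Qed.

Lemma card_bound (T U : finType) X : #|{: T}| + 1 <= X ->
  #|{: option (T * U)}| <= X * #|{: U}| - #|{: U}| + 1.
Proof. by move=> H; rewrite card_option card_prod; apply: arith. Qed.

Theorem theorem4 (A : finType) (M N : dfa A) :
  2 <= #|state M| ->
  1 <= #|state N| ->
  1 <= #|final M :\ start M| ->
  exists D : dfa A,
    #|state D| <= (2 ^ (#|state M| - 1) + 2 ^ (#|state M| - #|final M :\ start M| - 1))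
                  * #|state N| - #|state N| + 1 /\
    forall w : seq A, accepts D w <-> (kstar (accepts M) w /\ accepts N w).
Proof.
move=> Hm Hn Hk; exists (D M N); split; last exact: D_correct.
set m := #|state M|; set k := #|final M :\ start M|; set n := #|state N|.
set X := 2 ^ (m - 1) + 2 ^ (m - k - 1).
have HS : #|{: SM M}| + 1 <= X.
  rewrite card_sig.
  set s := start M; set F := final M; set F' := F :\ s.
  set C := ~: (s |: F').
  have sub : [pred P | good P] \subset
      ((fun Y => s |: Y) @: powerset [set~ s]) :|: (powerset C :\ set0).
    apply/subsetP => P; rewrite inE /good => /andP [nz imp].
    case: (boolP (s \in P)) => sP.
      rewrite in_setU; apply/orP; left; apply/imsetP; exists (P :\ s); last by rewrite setD1K.
      by rewrite powersetE; apply/subsetP => x; rewrite !inE => /andP [].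
    rewrite in_setU in_setD1 nz powersetE /=; apply/orP; right.
    apply/subsetP => x Hx; rewrite !inE negb_or.
    have xs : x != s by apply: contraNneq sP => <-.
    rewrite xs /=; apply/negP => xF.
    have : P :&: F != set0 by apply/set0Pn; exists x; rewrite inE Hx.
    by move=> H; move: imp; rewrite H /= (negbTE sP).
  have c1 : #|(fun Y => s |: Y) @: powerset [set~ s]| <= 2 ^ (m - 1).
    by apply: leq_trans (leq_imset_card _ _) _; rewrite card_powerset cardsC1 subn1.
  have cC : #|C| = m - k - 1.
    have := cardsC (s |: F'); rewrite cardsU1 setD11 /= -/k -/m => <-.
    by rewrite -/C -subnDA addnC add1n addn1 addnK.
  have c2 : #|powerset C :\ set0| = 2 ^ (m - k - 1) - 1.
    have := cardsD1 set0 (powerset C); rewrite powersetE sub0set card_powerset cC => ->.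
    by rewrite add1n subn1.
  have pos : 0 < 2 ^ (m - k - 1) by rewrite expn_gt0.
  apply: leq_trans (_ : #|((fun Y => s |: Y) @: powerset [set~ s]) :|: (powerset C :\ set0)| + 1 <= X).
    by rewrite leq_add2r; apply: subset_leq_card.
  rewrite cardsU; apply: leq_trans (_ : #|(fun Y => s |: Y) @: powerset [set~ s]| + #|powerset C :\ set0| + 1 <= X).
    by rewrite leq_add2r leq_subr.
  rewrite -addnA c2 subnK // /X; exact: leq_add.
have -> : #|state (D M N)| = #|{: option (SM M * state N)}| by [].
exact: (@card_bound (SM M) (state N) _ HS).
Qed.
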